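(* Let $\succ$ be a binary relation on $\mathcal{F}$ satisfying Axioms A1–A7 below, and define $\succsim$ on $X$ by $x\succsim y$ iff $y\not\succ x$. Let $f,g\in\mathcal{F}$ with $f(s)\succsim g(s)$ for all $s\in S$, and let $x\in X$. If $x\Join f$, then $g\not\succ x$; and if $x\Join g$, then $x\not\succ f$. Axioms: (A1) $\succ$ is asymmetric and transitive, and its restriction to $X$ is non-trivial and negatively transitive. (A2) For all $f,g,h\in\mathcal{F}$, $\{\alpha\in[0,1]:\alpha f+(1-\alpha)g\succ h\}$ and $\{\alpha\in[0,1]:h\succ\alpha f+(1-\alpha)g\}$ are open in $[0,1]$. (A3) For all $f,g\in\mathcal{F}$, $x\in X$, $\alpha\in(0,1)$: $f\succ g$ iff $\alpha f+(1-\alpha)x\succ\alpha g+(1-\alpha)x$. (A4) For all $x\in X$, $\{f:f\succ x\}$ and $\{f:x\succ f\}$ are convex. (A5) If $f(s)\succ g(s)$ for all $s\in S$ then $f\succ g$. (A6) If for all $x\in X$, $f\Join x$ implies $g\Join x$, then $f\Join g$. (A7) If $f\Join x$, $x\succ g$, $g\Join y$, $f\succ y$ (with $x,y\in X$), then $f\succ g$.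
   Context: $S$ is a set of states with algebra $\Sigma$; $X$ is a non-singleton convex subset of a real vector space; $\mathcal{F}$ is the set of simple acts $f:S\to X$ ($\Sigma$-measurable, finitely many values) with pointwise mixtures; elements of $X$ are identified with constant acts. $f\Join g$ means $f\not\succ g$ and $g\not\succ f$. *)

(* Defs.v *)
From HB Require Import structures.
From mathcomp Require Import all_boot all_order all_algebra.
From mathcomp Require Import boolp classical_sets cardinality reals.
Set Implicit Arguments. Unset Strict Implicit. Unset Printing Implicit Defensive.
Import Order.TTheory GRing.Theory Num.Theory.
Local Open Scope ring_scope.
Local Open Scope classical_set_scope.

Section Defs.
Context {R : realType} {V : lmodType R} {S : Type}.

Definition is_algebra (Sigma : set (set S)) : Prop :=
  Sigma set0 /\ (forall A, Sigma A -> Sigma (~` A)) /\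
  (forall A B, Sigma A -> Sigma B -> Sigma (A `|` B)).

Definition convex_set (X : set V) : Prop :=
  forall x y (a : R), X x -> X y -> 0 <= a <= 1 -> X (a *: x + (1 - a) *: y).

Definition is_act (Sigma : set (set S)) (X : set V) (f : S -> V) : Prop :=
  (forall s, X (f s)) /\ finite_set (range f) /\
  (forall v, Sigma (f @^-1` [set v])).

Definition cst (x : V) : S -> V := fun _ => x.

Definition mix (a : R) (f g : S -> V) : S -> V :=
  fun s => a *: f s + (1 - a) *: g s.

Definition incomp (P : (S -> V) -> (S -> V) -> Prop) (f g : S -> V) : Prop :=
  ~ P f g /\ ~ P g f.

Section Prefs.
Variables (Sigma : set (set S)) (X : set V) (P : (S -> V) -> (S -> V) -> Prop).
Let F := is_act Sigma X.

Definition A1 : Prop :=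
  (forall f g, F f -> F g -> P f g -> ~ P g f) /\
  (forall f g h, F f -> F g -> F h -> P f g -> P g h -> P f h) /\
  (exists x y, X x /\ X y /\ P (cst x) (cst y)) /\
  (forall x y z, X x -> X y -> X z -> P (cst x) (cst z) ->
     P (cst x) (cst y) \/ P (cst y) (cst z)).

Definition open01 (A : R -> Prop) : Prop :=
  forall a, 0 <= a <= 1 -> A a ->
    exists2 e : R, 0 < e & forall b, 0 <= b <= 1 -> `|b - a| < e -> A b.

Definition A2 : Prop :=
  forall f g h, F f -> F g -> F h ->
    open01 (fun a => P (mix a f g) h) /\ open01 (fun a => P h (mix a f g)).

Definition A3 : Prop :=
  forall f g x (a : R), F f -> F g -> X x -> 0 < a < 1 ->
    (P f g <-> P (mix a f (cst x)) (mix a g (cst x))).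

Definition A4 : Prop :=
  forall x, X x ->
    (forall f g (a : R), F f -> F g -> 0 <= a <= 1 ->
       P f (cst x) -> P g (cst x) -> P (mix a f g) (cst x)) /\
    (forall f g (a : R), F f -> F g -> 0 <= a <= 1 ->
       P (cst x) f -> P (cst x) g -> P (cst x) (mix a f g)).

Definition A5 : Prop :=
  forall f g, F f -> F g -> (forall s, P (cst (f s)) (cst (g s))) -> P f g.

Definition A6 : Prop :=
  forall f g, F f -> F g ->
    (forall x, X x -> incomp P f (cst x) -> incomp P g (cst x)) -> incomp P f g.

Definition A7 : Prop :=
  forall f g x y, F f -> F g -> X x -> X y ->
    incomp P f (cst x) -> P (cst x) g -> incomp P g (cst y) -> P f (cst y) ->
    P f g.

Definition prefs_ok : Prop := A1 /\ A2 /\ A3 /\ A4 /\ A5 /\ A6 /\ A7.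
End Prefs.
End Defs.

(* Main.v *)
Require Import Defs.
From HB Require Import structures.
From mathcomp Require Import all_boot all_order all_algebra.
From mathcomp Require Import boolp classical_sets cardinality reals.
From mathcomp Require Import lra.
Import Order.TTheory GRing.Theory Num.Theory.
Local Open Scope ring_scope.
Local Open Scope classical_set_scope.

Section Aux.
Context {R : realType} {V : lmodType R} {S : Type}.
Variables (Sigma : set (set S)) (X : set V).

Lemma act_cst (x : V) : is_algebra Sigma -> X x -> is_act Sigma X (cst x).
Proof.
move=> [H0 [HC HU]] Xx; split; first by [].
split.
  exact: (finite_image_cst x).
move=> v; case: (pselect (x = v)) => [<-|nxv].
  have -> : (cst x : S -> V) @^-1` [set x] = ~` set0.
    by apply/seteqP; split => s /=; [move=> _ [] | ].
  exact: HC.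
have -> : (cst x : S -> V) @^-1` [set v] = set0.
  by apply/seteqP; split => s //=.
exact: H0.
Qed.

Lemma act_mix (f : S -> V) (x : V) (a : R) : convex_set X ->
  is_act Sigma X f -> X x -> 0 < a <= 1 -> is_act Sigma X (mix a f (cst x)).
Proof.
move=> cX [Xf [Ff Mf]] Xx /andP[a0 a1]; split.
  move=> s; rewrite /mix /cst; apply: cX => //; rewrite ltW //=.
split.
  have -> : range (mix a f (cst x)) =
     [set (fun v => a *: v + (1 - a) *: x) y | y in range f].
    apply/seteqP; split => v /=.
      by move=> [s _ <-]; exists (f s) => //; exists s.
    by move=> [y [s _ <-] <-]; exists s.
  exact: finite_image.
move=> v.
have -> : mix a f (cst x) @^-1` [set v] = f @^-1` [set a^-1 *: (v - (1 - a) *: x)].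
  have an : a != 0 by rewrite gt_eqF.
  apply/seteqP; split => s /=; rewrite /mix /cst.
    by move=> <-; rewrite addrK scalerA mulVf // scale1r.
  by move=> ->; rewrite scalerA mulfV // scale1r subrK.
exact: Mf.
Qed.

Lemma mix1 (f g : S -> V) : mix 1 f g = f.
Proof. by apply/funext => s; rewrite /mix subrr scale0r addr0 scale1r. Qed.

Lemma mix_same (a : R) (x : V) : mix a (cst x) (cst x) = (cst x : S -> V).
Proof. by apply/funext => s; rewrite /mix /cst -scalerDl subrKC scale1r. Qed.

End Aux.

Section Core.
Context {R : realType} {V : lmodType R} {S : Type}.
Variables (Sigma : set (set S)) (X : set V) (P : (S -> V) -> (S -> V) -> Prop).
Hypothesis alg : is_algebra Sigma.
Hypothesis cX : convex_set X.
Hypothesis trans : forall f g h, is_act Sigma X f -> is_act Sigma X g ->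
  is_act Sigma X h -> P f g -> P g h -> P f h.
Hypothesis ntriv : exists x y, X x /\ X y /\ P (cst x) (cst y).
Hypothesis ntr : forall x y z, X x -> X y -> X z -> P (cst x) (cst z) ->
     P (cst x) (cst y) \/ P (cst y) (cst z).
Hypothesis op : forall f g h, is_act Sigma X f -> is_act Sigma X g ->
  is_act Sigma X h -> open01 (fun a => P (mix a f g) h).
Hypothesis a3 : A3 Sigma X P.
Hypothesis a5 : A5 Sigma X P.

Lemma ptw (a b c d : V) (al : R) : X a -> X b -> X c -> X d ->
  ~ P (cst b) (cst a) -> P (cst c) (cst d) -> 0 < al < 1 ->
  P (cst (al *: a + (1 - al) *: c)) (cst (al *: b + (1 - al) *: d)).
Proof.
move=> Xa Xb Xc Xd nba Pcd /andP[l0 l1].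
have al01 : 0 <= al <= 1 by rewrite !ltW.
have Xu : X (al *: a + (1 - al) *: c) by apply: cX.
have Xw : X (al *: a + (1 - al) *: d) by apply: cX.
have Xy : X (al *: b + (1 - al) *: d) by apply: cX.
have l01 : 0 < al < 1 by rewrite l0 l1.
have l01' : 0 < 1 - al < 1 by apply/andP; split; lra.
have E : forall u, mix (1 - al) (cst u) (cst a) = (cst (al *: a + (1 - al) *: u) : S -> V).
  by move=> u; apply/funext => s; rewrite /mix /cst addrC; congr (_ *: _ + _); lra.
have s1 : P (cst (al *: a + (1 - al) *: c)) (cst (al *: a + (1 - al) *: d)).
  have := proj1 (a3 (cst c) (cst d) a (1 - al) (act_cst _ _ _ alg Xc) (act_cst _ _ _ alg Xd) Xa l01') Pcd.
  by rewrite !E.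
have s2 : ~ P (cst (al *: b + (1 - al) *: d)) (cst (al *: a + (1 - al) *: d)).
  move=> H; apply: nba.
  exact: (proj2 (a3 (cst b) (cst a) d al (act_cst _ _ _ alg Xb) (act_cst _ _ _ alg Xa) Xd l01) H).
by case: (ntr _ _ _ Xu Xy Xw s1).
Qed.


Lemma coreA (f g : S -> V) (x z : V) : is_act Sigma X f -> is_act Sigma X g ->
  X x -> X z -> P (cst x) (cst z) ->
  (forall s, ~ P (cst (g s)) (cst (f s))) -> ~ P f (cst x) -> ~ P g (cst x).
Proof.
move=> Ff Fg Xx Xz Pxz pw nfx Pgx.
have Fx := act_cst _ _ _ alg Xx.
have Fz := act_cst _ _ _ alg Xz.
have := op _ _ _ Fg Fz Fx.
move=> /(_ 1); rewrite mix1 ler01 lexx => /(_ isT Pgx) [e e0 He].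
pose d := Order.min (e / 2) (1 / 2).
have d0 : 0 < d by rewrite lt_min; apply/andP; split; lra.
have [d1 d2] : d <= e / 2 /\ d <= 1 / 2 by apply/andP; rewrite -le_min.
pose al := 1 - d.
have l01 : 0 < al < 1 by apply/andP; split; rewrite /al; lra.
have l01' : 0 < al <= 1 by apply/andP; split; rewrite /al; lra.
have Hh : P (mix al g (cst z)) (cst x).
  apply: He; first by apply/andP; split; rewrite /al; lra.
  have -> : al - 1 = - d by rewrite /al; lra.
  by rewrite normrN gtr0_norm //; lra.
have Fh := act_mix _ _ _ _ _ cX Fg Xz l01'.
have Ff' := act_mix _ _ _ _ _ cX Ff Xx l01'.
have Pfh : P (mix al f (cst x)) (mix al g (cst z)).
  apply: a5 => // s.
  exact: (ptw _ _ _ _ _ (proj1 Ff s) (proj1 Fg s) Xx Xz (pw s) Pxz l01).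
have Pf'x := trans _ _ _ Ff' Fh Fx Pfh Hh.
apply: nfx; apply: (proj2 (a3 f (cst x) x al Ff Fx Xx l01)).
by rewrite mix_same.
Qed.


Lemma core (f g : S -> V) (x : V) : is_act Sigma X f -> is_act Sigma X g -> X x ->
  (forall s, ~ P (cst (g s)) (cst (f s))) -> ~ P f (cst x) -> ~ P g (cst x).
Proof.
move=> Ff Fg Xx pw nfx Pgx.
have Fx := act_cst _ _ _ alg Xx.
have [x1 [x2 [X1 [X2 P12]]]] := ntriv.
case: (ntr _ _ _ X1 Xx X2 P12) => [P1x | Px2]; last first.
  exact: (coreA _ _ _ _ Ff Fg Xx X2 Px2 pw nfx Pgx).
have hl : 0 < (1 / 2 : R) < 1 by apply/andP; split; lra.
have hl' : 0 < (1 / 2 : R) <= 1 by apply/andP; split; lra.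
have X' : X ((1 / 2) *: x + (1 - 1 / 2) *: x1) by apply: cX => //; apply/andP; split; lra.
have F1 := act_cst _ _ _ alg X1.
have Ff1 := act_mix _ _ _ _ _ cX Ff X1 hl'.
have Fg1 := act_mix _ _ _ _ _ cX Fg X1 hl'.
have Px'x : P (cst ((1 / 2) *: x + (1 - 1 / 2) *: x1)) (cst x).
  have := proj1 (a3 (cst x1) (cst x) x (1 / 2) F1 Fx Xx hl) P1x.
  rewrite mix_same.
  have -> : mix (1 / 2) (cst x1) (cst x) = (cst ((1 / 2) *: x + (1 - 1 / 2) *: x1) : S -> V) => //.
  by apply/funext => s; rewrite /mix /cst addrC; congr (_ *: _ + _ *: _); lra.
apply: (coreA _ _ _ _ Ff1 Fg1 X' Xx Px'x).
- move=> s H; apply: (pw s).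
  exact: (proj2 (a3 (cst (g s)) (cst (f s)) x1 (1 / 2) (act_cst _ _ _ alg (proj1 Fg s)) (act_cst _ _ _ alg (proj1 Ff s)) X1 hl) H).
- by move=> H; apply: nfx; exact: (proj2 (a3 f (cst x) x1 (1 / 2) Ff Fx X1 hl) H).
- exact: (proj1 (a3 g (cst x) x1 (1 / 2) Fg Fx X1 hl) Pgx).
Qed.

End Core.

Theorem lemma4 (R : realType) (V : lmodType R) (S : Type)
  (Sigma : set (set S)) (X : set V)
  (P : (S -> V) -> (S -> V) -> Prop) :
  is_algebra Sigma -> convex_set X ->
  (exists x y, X x /\ X y /\ x <> y) ->
  prefs_ok Sigma X P ->
  forall f g x, is_act Sigma X f -> is_act Sigma X g -> X x ->
  (* f(s) ≿ g(s) for all s, where x ≿ y iff ~ (y ≻ x) *)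
  (forall s, ~ P (cst (g s)) (cst (f s))) ->
  (incomp P (cst x) f -> ~ P g (cst x)) /\
  (incomp P (cst x) g -> ~ P (cst x) f).
Proof.
move=> alg cX _ [[asym [tr [nt ntr]]] [a2 [a3 [a4 [a5 [a6 a7]]]]]] f g x Ff Fg Xx pw.
split.
  move=> [_ nfx].
  have op : forall f g h, is_act Sigma X f -> is_act Sigma X g ->
    is_act Sigma X h -> open01 (fun a => P (mix a f g) h).
    by move=> f1 g1 h1 F1 G1 H1; exact: (proj1 (a2 f1 g1 h1 F1 G1 H1)).
  have tr0 : forall f g h, is_act Sigma X f -> is_act Sigma X g ->
    is_act Sigma X h -> P f g -> P g h -> P f h by exact: tr.
  have ntr0 : forall x y z, X x -> X y -> X z -> P (cst x) (cst z) ->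
     P (cst x) (cst y) \/ P (cst y) (cst z) by exact: ntr.
  exact: (core _ _ _ alg cX tr0 nt ntr0 op a3 a5 f g x Ff Fg Xx pw nfx).
move=> [nxg _].
pose P' := fun f g : S -> V => P g f.
have tr' : forall f g h, is_act Sigma X f -> is_act Sigma X g ->
  is_act Sigma X h -> P' f g -> P' g h -> P' f h.
  by move=> f1 g1 h1 F1 G1 H1 A B; exact: (tr h1 g1 f1 H1 G1 F1 B A).
have nt' : exists x y, X x /\ X y /\ P' (cst x) (cst y).
  by case: nt => [a [b [Xa [Xb Pab]]]]; exists b, a.
have ntr' : forall x y z, X x -> X y -> X z -> P' (cst x) (cst z) ->
     P' (cst x) (cst y) \/ P' (cst y) (cst z).
  move=> x1 y1 z1 X1 Y1 Z1 H.
  by case: (ntr z1 y1 x1 Z1 Y1 X1 H) => [A|B]; [right|left].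
have op' : forall f g h, is_act Sigma X f -> is_act Sigma X g ->
  is_act Sigma X h -> open01 (fun a => P' (mix a f g) h).
  by move=> f1 g1 h1 F1 G1 H1; exact: (proj2 (a2 f1 g1 h1 F1 G1 H1)).
have a3' : A3 Sigma X P'.
  by move=> f1 g1 x1 a F1 G1 X1 ha; exact: (a3 g1 f1 x1 a G1 F1 X1 ha).
have a5' : A5 Sigma X P'.
  by move=> f1 g1 F1 G1 H; exact: (a5 g1 f1 G1 F1 H).
exact: (core _ _ _ alg cX tr' nt' ntr' op' a3' a5' g f x Fg Ff Xx pw nxg).
Qed.
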